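(* Let $\mathtt{X}$ and $\mathtt{Y}$ be two operations in a run $r$ of a protocol $P$. If $\mathtt{Y}$ completes in $r$ and $\mathtt{X}\not\boldsymbol{\rightsquigarrow}_r\mathtt{Y}$, then there exists a run $r'\approx r$ in which both (i) $\mathtt{Y}<_{r'}\mathtt{X}$, and (ii) $\mathtt{X}<_{r'}\mathtt{Z}$ for every operation $\mathtt{Z}$ that completes in $r$ such that $\mathtt{X}<_r\mathtt{Z}$ and $\mathtt{Z}\not\boldsymbol{\rightsquigarrow}_r\mathtt{Y}$ (here operations of $r'$ are identified with their corresponding operations of $r$).
   Context: Model: $n$ processes connected by directed FIFO channels; an environment (adversary) schedules everything. Time is identified with the natural numbers; a run $r=r(0),r(1),\dots$ is an infinite sequence of global states, $r_i(m)$ denotes process $i$'s local state at time $m$, and round $m+1$ transforms $r(m)$ into $r(m+1)$. In each round the environment chooses independently for each process $i$ one of: $\mathtt{move}_i$ ($i$ performs an action allowed by its protocol at its current local state — a local action, a message send, or a response action), $\mathtt{skip}_i$, $\mathtt{invoke}_i(x)$ ($i$ receives external input $x$), or $\mathtt{deliver}_i$ of a message from some $j$ (delivered if it is the oldest message in transit on the channel from $j$ to $i$). The local state of a process consists of its initial value and the complete ordered history of its actions, messages sent and received, and inputs. A run of protocol $P$ starts in an initial global state and every process action is allowed by $P$ at the current local state. A node is a process-time pair $\langle p,t\rangle$. Message chains: $\langle p,t\rangle\rightsquigarrow_r\langle q,t'\rangle$ holds if (1a) $p=q$ and $t<t'$, or (1b) $p$ sends a message to $q$ in round $t+1$ of $r$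 delivered no later than round $t'$, or (2) transitively via some intermediate node. Runs are locally equivalent, $r\approx r'$, if every process passes through exactly the same set of local states in both. Operations: an operation $\mathtt{X}$ of process $i$ starts with an invocation input $\mathtt{invoke}_i(\cdot)$ in round $t$ and ends with a matching response action performed by $i$ in round $t'$; write $\mathtt{X}.s=\langle i,t\rangle$, $\mathtt{X}.e=\langle i,t'\rangle$, $t_{\mathtt{X}.s}(r)=t$, $t_{\mathtt{X}.e}(r)=t'$. $\mathtt{X}$ completes in $r$ if both invocation and response occur. $\mathtt{X}<_r\mathtt{Y}$ means $t_{\mathtt{X}.e}(r)<t_{\mathtt{Y}.s}(r)$. $\mathtt{X}\boldsymbol{\rightsquigarrow}_r\mathtt{Y}$ means $\mathtt{X}.s\rightsquigarrow_r\mathtt{Y}.e$. An operation $\mathtt{X}$ of $i$ in $r$ corresponds to an operation $\mathtt{X}'$ of $i$ in $r'$ if $r_i(t_{\mathtt{X}.s}(r))=r'_i(t_{\mathtt{X}'.s}(r'))$ and $r_i(t_{\mathtt{X}.e}(r))=r'_i(t_{\mathtt{X}'.e}(r'))$. *)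

(* Defs.v *)
From mathcomp Require Import all_boot.
Set Implicit Arguments.
Unset Strict Implicit.
Unset Printing Implicit Defensive.

Section Model.
Variables (n : nat)
          (V : Type)
          (A : Type)
          (M : Type)
          (Inp : Type)
          (Res : Type).

Inductive act : Type :=
| ALocal of A
| ASend of 'I_n & M
| AResp of Res.

Inductive ev : Type :=
| EAct of act
| EInv of Inp
| ERecv of 'I_n & M.

Definition lstate : Type := (V * seq ev)%type.
Definition addev (s : lstate) (e : ev) : lstate := (s.1, rcons s.2 e).

Record gstate : Type := GState {
  loc : 'I_n -> lstate;
  chan : 'I_n -> 'I_n -> seq M   (* chan j i : channel from j to i, oldest first *)
}.

Inductive envact : Type :=
| EnvMove
| EnvSkip
| EnvInvoke of Inp
| EnvDeliver of 'I_n.          (* deliver_i of the oldest message from j *)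

Definition protocol : Type := lstate -> act -> Prop.

Definition new_loc (g : gstate) (i : 'I_n) (e : envact) (a : act) : lstate :=
  match e with
  | EnvMove => addev (loc g i) (EAct a)
  | EnvSkip => loc g i
  | EnvInvoke x => addev (loc g i) (EInv x)
  | EnvDeliver j =>
      match chan g j i with
      | [::] => loc g i
      | m :: _ => addev (loc g i) (ERecv j m)
      end
  end.

Definition after_delivery (g : gstate) (j i : 'I_n) (e : envact) : seq M :=
  match e with
  | EnvDeliver k => if k == j then behead (chan g j i) else chan g j i
  | _ => chan g j i
  end.

Definition sent_to (e : envact) (a : act) (i : 'I_n) : seq M :=
  match e, a with
  | EnvMove, ASend k m => if k == i then [:: m] else [::]
  | _, _ => [::]
  end.

Definition round (P : protocol) (g g' : gstate) : Prop :=
  exists (env : 'I_n -> envact) (acts : 'I_n -> act),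
    (forall i, env i = EnvMove -> P (loc g i) (acts i)) /\
    (forall i, loc g' i = new_loc g i (env i) (acts i)) /\
    (forall j i, chan g' j i =
       after_delivery g j i (env i) ++ sent_to (env j) (acts j) i).

Definition initial (g : gstate) : Prop :=
  (forall i, (loc g i).2 = [::]) /\ (forall j i, chan g j i = [::]).

Definition run := nat -> gstate.

Definition is_run (P : protocol) (r : run) : Prop :=
  initial (r 0) /\ forall m, round P (r m) (r m.+1).

Definition lst (r : run) (i : 'I_n) (m : nat) : lstate := loc (r m) i.

Definition ev_at (r : run) (i : 'I_n) (t : nat) (e : ev) : Prop :=
  0 < t /\ lst r i t = addev (lst r i t.-1) e.

Definition is_send_to (q : 'I_n) (e : ev) : bool :=
  if e is EAct (ASend k _) then k == q else false.
Definition is_recv_from (p : 'I_n) (e : ev) : bool :=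
  if e is ERecv k _ then k == p else false.

(* p sends a message to q in round t+1 of r, delivered no later than round t'
   (FIFO: the k-th message sent on p->q is the k-th one received). *)
Definition msg_delivered (r : run) (p q : 'I_n) (t t' : nat) : Prop :=
  exists m, ev_at r p t.+1 (EAct (ASend q m)) /\
    count (is_send_to q) (lst r p t).2 < count (is_recv_from p) (lst r q t').2.

Definition node := ('I_n * nat)%type.

Inductive chain (r : run) : node -> node -> Prop :=
| chain_loc p t t' : t < t' -> chain r (p, t) (p, t')
| chain_msg p q t t' : msg_delivered r p q t t' -> chain r (p, t) (q, t')
| chain_trans a b c : chain r a b -> chain r b c -> chain r a c.

Definition loc_equiv (r r' : run) : Prop :=
  forall i s, (exists m, lst r i m = s) <-> (exists m, lst r' i m = s).

(* Operations: an operation of process i is identified by the round ts of its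
   invocation; it ends in round te with the matching (first subsequent)
   response action, with no other invocation/response of i in between. *)
Definition invoked_at (r : run) (i : 'I_n) (t : nat) : Prop :=
  exists x, ev_at r i t (EInv x).
Definition responds_at (r : run) (i : 'I_n) (t : nat) : Prop :=
  exists v, ev_at r i t (EAct (AResp v)).

Definition op_end (r : run) (i : 'I_n) (ts te : nat) : Prop :=
  invoked_at r i ts /\ ts < te /\ responds_at r i te /\
  (forall t, ts < t < te -> ~ invoked_at r i t /\ ~ responds_at r i t).

Definition completes (r : run) (i : 'I_n) (ts : nat) : Prop :=
  exists te, op_end r i ts te.

Definition corresponds (r r' : run) (i : 'I_n) (ts ts' : nat) : Prop :=
  invoked_at r i ts /\ invoked_at r' i ts' /\ lst r i ts = lst r' i ts' /\
  (forall te, op_end r i ts te ->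
     exists te', op_end r' i ts' te' /\ lst r i te = lst r' i te').

End Model.

(* Main.v *)
Require Import Defs.
From mathcomp Require Import all_boot zify.
From Stdlib Require Import Classical ClassicalEpsilon.
Set Implicit Arguments.
Unset Strict Implicit.
Unset Printing Implicit Defensive.

Arguments EnvMove {n Inp}.
Arguments EnvDeliver {n Inp} _.
Arguments EnvInvoke {n Inp} _.
Arguments ALocal {n A M Res} _.
Arguments ASend {n A M Res} _ _.
Arguments AResp {n A M Res} _.
Arguments EAct {n A M Inp Res} _.
Arguments EInv {n A M Inp Res} _.
Arguments ERecv {n A M Inp Res} _ _.
Arguments EnvSkip {n Inp}.
Section Gen.
Variables (n : nat) (V A M Inp Res : Type).
Notation ev := (ev n A M Inp Res).
Notation envact := (envact n Inp).

Definition getsend (q : 'I_n) (e : ev) : option M :=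
  match e with EAct (ASend k m) => if k == q then Some m else None | _ => None end.
Definition isdel (j : 'I_n) (e : envact) : bool :=
  if e is EnvDeliver k then k == j else false.

Lemma size_pmap_send q h : size (pmap (getsend q) h) = count (is_send_to q) h.
Proof.
elim: h => [//|e h IH] /=; rewrite /= -IH.
by case: e => [[a|k m|v]|x|k m] //=; case: (k == q).
Qed.

Lemma after_del (g : gstate n V A M Inp Res) j i e :
  after_delivery g j i e = if isdel j e then behead (chan g j i) else chan g j i.
Proof. by case: e => //= k; rewrite eq_sym. Qed.

Lemma round_norm (P : protocol n V A M Inp Res) g g' : round P g g' ->
  exists (env : 'I_n -> envact) (acts : 'I_n -> act n A M Res),
    (forall i, env i = EnvMove -> P (loc g i) (acts i)) /\
    (forall i, loc g' i = new_loc g i (env i) (acts i)) /\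
    (forall j i, chan g' j i =
       after_delivery g j i (env i) ++ sent_to (env j) (acts j) i) /\
    (forall i k, env i = EnvDeliver k -> chan g k i <> [::]).
Proof.
move=> [env [acts [H1 [H2 H3]]]].
pose env2 i := match env i with
  | EnvDeliver k => (match chan g k i with [::] => EnvSkip | _ => EnvDeliver k end)
  | e => e end.
exists env2, acts; split; last split; last split.
- move=> i; rewrite /env2; case E: (env i) => [| |x|k] //; first by move=> _; apply: H1.
  by case: (chan g k i).
- move=> i; rewrite H2 /env2 /new_loc; case: (env i) => // k.
  by case E: (chan g k i) => [|m s] //=; rewrite E.
- have Hs : forall j0 i, sent_to (env2 j0) (acts j0) i = sent_to (env j0) (acts j0) i.
    move=> j0 i; rewrite /env2; case: (env j0) => // k.
    by case: (chan g k j0).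
  move=> j0 i; rewrite H3 Hs; congr (_ ++ _).
  rewrite /after_delivery /env2; case: (env i) => // k.
  case E: (chan g k i) => [|m s] //.
  case: eqP => // <-; by rewrite E.
- move=> i k; rewrite /env2; case: (env i) => // k'.
  by case E: (chan g k' i) => [|m s] // [<-]; rewrite E.
Qed.

Lemma drop_catl (T : Type) k (s t : seq T) : k <= size s -> drop k (s ++ t) = drop k s ++ t.
Proof.
move=> H; rewrite drop_cat; case: ltnP => H2 //.
have ->: k = size s by lia.
by rewrite subnn drop0 drop_size.
Qed.

Lemma behead_drop (T : Type) k (s : seq T) : behead (drop k s) = drop k.+1 s.
Proof. by elim: s k => [|x s IH] [|k] //=; rewrite drop0. Qed.

End Gen.

Section RunFacts.
Variables (n : nat) (V A M Inp Res : Type) (P : protocol n V A M Inp Res).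
Variable r : run n V A M Inp Res.
Variable E : nat -> 'I_n -> envact n Inp.
Variable Ac : nat -> 'I_n -> act n A M Res.
Hypothesis H0 : initial (r 0).
Hypothesis HR1 : forall t i, E t i = EnvMove -> P (lst r i t) (Ac t i).
Hypothesis HR2 : forall t i, lst r i t.+1 = new_loc (r t) i (E t i) (Ac t i).
Hypothesis HR3 : forall t j i, chan (r t.+1) j i =
   after_delivery (r t) j i (E t i) ++ sent_to (E t j) (Ac t j) i.
Hypothesis HR4 : forall t i k, E t i = EnvDeliver k -> chan (r t) k i <> [::].

Definition rc (i j : 'I_n) t := count (is_recv_from j) (lst r i t).2.
Definition sl (j i : 'I_n) t := pmap (getsend i) (lst r j t).2.
Definition sz (i : 'I_n) t := size (lst r i t).2.

Lemma rc_step t i j : rc i j t.+1 = rc i j t + isdel j (E t i).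
Proof.
rewrite /rc HR2 /new_loc /addev.
case Ee: (E t i) => [| |x|k] /=; rewrite ?addn0 //; try by rewrite -cats1 count_cat /= !addn0.
have := HR4 Ee; case: (chan (r t) k i) => [//|m s] _.
by rewrite -cats1 count_cat /= addn0.
Qed.

Lemma sl_step t j i : sl j i t.+1 = sl j i t ++ sent_to (E t j) (Ac t j) i.
Proof.
rewrite /sl HR2 /new_loc /addev.
case Ee: (E t j) => [| |x|k] /=; rewrite ?cats0 //.
- rewrite -cats1 pmap_cat /=; case: (Ac t j) => [a|k m|v] //=.
  by rewrite /getsend; case: (k == i).
- by rewrite -cats1 pmap_cat /= cats0.
- have := HR4 Ee; case: (chan (r t) k j) => [//|m s] _.
  by rewrite -cats1 pmap_cat /= cats0.
Qed.

Lemma hist_step t p : (lst r p t.+1).1 = (lst r p t).1 /\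
  exists s, (lst r p t.+1).2 = (lst r p t).2 ++ s.
Proof.
rewrite HR2 /new_loc /addev /lst; case: (E t p) => [| |x|k] /=.
- by split=> //; exists [:: EAct (Ac t p)]; rewrite cats1.
- by split=> //; exists [::]; rewrite cats0.
- by split=> //; exists [:: EInv x]; rewrite cats1.
- case: (chan (r t) k p) => [|m s] /=; first by split=> //; exists [::]; rewrite cats0.
  by split=> //; exists [:: ERecv k m]; rewrite cats1.
Qed.

Lemma hist_mono t t' p : t <= t' -> (lst r p t').1 = (lst r p t).1 /\
  exists s, (lst r p t').2 = (lst r p t).2 ++ s.
Proof.
move=> /subnK <-; elim: (t' - t) => [|d [IH1 [s IH2]]] /=.
  by split=> //; exists [::]; rewrite cats0.
have [H1 [s' H2]] := hist_step (d + t) p.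
rewrite addSn; split; first by rewrite H1.
by exists (s ++ s'); rewrite H2 IH2 catA.
Qed.

Lemma rc_mono i j t t' : t <= t' -> rc i j t <= rc i j t'.
Proof. by move=> /(hist_mono i) [_ [s Hs]]; rewrite /rc Hs count_cat leq_addr. Qed.

Lemma sl_prefix j i t t' : t <= t' -> exists s, sl j i t' = sl j i t ++ s.
Proof. by move=> /(hist_mono j) [_ [s Hs]]; rewrite /sl Hs pmap_cat; eexists. Qed.

Lemma size_sl_mono j i t t' : t <= t' -> size (sl j i t) <= size (sl j i t').
Proof. by move=> /(sl_prefix j i) [s ->]; rewrite size_cat leq_addr. Qed.

Lemma sz_mono p t t' : t <= t' -> sz p t <= sz p t'.
Proof. by move=> /(hist_mono p) [_ [s Hs]]; rewrite /sz Hs size_cat leq_addr. Qed.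

Lemma size_sl j i t : size (sl j i t) = count (is_send_to i) (lst r j t).2.
Proof. exact: size_pmap_send. Qed.

Lemma inv_r t : (forall j i, chan (r t) j i = drop (rc i j t) (sl j i t)) /\
                (forall j i, rc i j t <= size (sl j i t)).
Proof.
elim: t => [|t [IH1 IH2]].
  case: H0 => Hl Hc; split=> j i; rewrite /rc /sl /lst !Hl ?Hc //.
have Hd : forall j i, isdel j (E t i) -> rc i j t < size (sl j i t).
  move=> j i; case Ee: (E t i) => [| |x|k] //= /eqP Hk; subst k.
  have := HR4 Ee; rewrite IH1; move: (IH2 j i); rewrite leq_eqVlt.
  by case/orP => // /eqP ->; rewrite drop_size.
split=> j i.
- rewrite HR3 after_del rc_step sl_step IH1.
  case Hdl: (isdel j (E t i)).
  + by rewrite behead_drop addn1 drop_catl //; apply: Hd; rewrite Hdl.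
  + by rewrite addn0 drop_catl.
- rewrite rc_step sl_step size_cat.
  case Hdl: (isdel j (E t i)).
  + by have := Hd j i; rewrite Hdl addn1 => /(_ isT) H; apply: leq_trans H (leq_addr _ _).
  + by rewrite addn0; apply: leq_trans (IH2 j i) (leq_addr _ _).
Qed.


Lemma ev_at_hist p t e : ev_at r p t e -> 0 < t /\ (lst r p t).2 = rcons (lst r p t.-1).2 e.
Proof. by case=> H1 H2; split=> //; rewrite H2. Qed.

Lemma ev_inj p t e1 e2 : ev_at r p t e1 -> ev_at r p t e2 -> e1 = e2.
Proof.
move=> /ev_at_hist [_ H1] /ev_at_hist [_ H2]; rewrite H1 in H2.
exact: rcons_injr H2.
Qed.

Lemma chain_time a b : chain r a b -> a.2 < b.2.
Proof.
elim=> //= [p q t t' [m [H1 H2]]|]; last by move=> a0 b0 c0 _ H1 _ H2; apply: ltn_trans H1 H2.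
rewrite ltnNge; apply/negP => Hle.
have := (inv_r t').2 p q; rewrite /rc size_sl => H3.
have := size_sl_mono p q Hle; rewrite !size_sl => H4.
lia.
Qed.

Lemma chain_nonsend_gen a c : chain r a c -> forall p t, a = (p, t) ->
  (forall q m, ~ ev_at r p t.+1 (EAct (ASend q m))) ->
  chain r (p, t.+1) c \/ c = (p, t.+1).
Proof.
elim=> [p0 t0 t' Hlt|p0 q t0 t' [m [Hm _]]|a0 b c0 _ IH1 H2 _] p t Ha Hns.
- case: Ha => <- <-.
  rewrite leq_eqVlt in Hlt; case/orP: Hlt => [/eqP ->|Hlt]; first by right.
  by left; apply: chain_loc.
- by case: Ha => E1 E2; subst; case: (Hns _ _ Hm).
- case: (IH1 p t Ha Hns) => [Hb|Eb]; last by subst b; left.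
  by left; apply: chain_trans Hb H2.
Qed.

Lemma chain_nonsend p t c : chain r (p, t) c ->
  (forall q m, ~ ev_at r p t.+1 (EAct (ASend q m))) ->
  chain r (p, t.+1) c \/ c = (p, t.+1).
Proof. by move=> H; apply: chain_nonsend_gen H p t erefl. Qed.

Lemma chain_down p s t c : t <= s -> chain r (p, s) c -> chain r (p, t) c.
Proof.
rewrite leq_eqVlt => /orP [/eqP ->//|Hlt] H.
by apply: chain_trans H; apply: chain_loc.
Qed.

Lemma ivt (g : nat -> nat) a b k : a <= b -> g a <= k -> k < g b ->
  exists s, a <= s < b /\ g s <= k < g s.+1.
Proof.
elim: b => [|b IH] Hab Ha Hb.
  by move: Hab; rewrite leqn0 => /eqP Ea; subst a; lia.
have Hab' : a <= b.
  rewrite leq_eqVlt in Hab; case/orP: Hab => [/eqP Ea|]; last by [].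
  by subst a; lia.
case: (leqP (g b) k) => Hgb.
  by exists b; split=> //; lia.
have [s [H1 H2]] := IH Hab' Ha Hgb.
by exists s; split=> //; lia.
Qed.

Variables (j : 'I_n) (ty tye : nat).
Hypothesis HY : op_end r j ty tye.

Definition ph p t := 0 < t /\ (chain r (p, t.-1) (j, tye) \/ chain r (p, t) (j, tye) \/ (p, t) = (j, tye)).
Definition phb p t : bool := if excluded_middle_informative (ph p t) then true else false.

Lemma phbP p t : phb p t <-> ph p t.
Proof. by rewrite /phb; case: excluded_middle_informative. Qed.

Fixpoint cmax p m : nat := if m is m'.+1 then (if phb p m then m else cmax p m') else 0.
Definition cut p := cmax p tye.

Lemma ph_le p t : ph p t -> t <= tye.
Proof.
case=> H0' [/chain_time /= H|[/chain_time /= H|[_ ->]]] //; lia.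
Qed.

Lemma cmax_le p m : cmax p m <= m.
Proof. by elim: m => //= m IH; case: phb => //; apply: leq_trans IH _. Qed.

Lemma cmax_ge p m t : ph p t -> t <= m -> t <= cmax p m.
Proof.
move=> Hp; elim: m => [|m IH] Htm /=; first by case: Hp; lia.
case Hb: (phb p m.+1) => //.
rewrite leq_eqVlt in Htm; case/orP: Htm => [/eqP Et|Htm]; last by apply: IH.
by subst t; move/phbP: Hp; rewrite Hb.
Qed.

Lemma cmax_ph p m : 0 < cmax p m -> ph p (cmax p m).
Proof.
elim: m => //= m IH; case Hb: (phb p m.+1) => //.
by move=> _; apply/phbP.
Qed.

Lemma cut_le p : cut p <= tye. Proof. exact: cmax_le. Qed.
Lemma cut_ge p t : ph p t -> t <= cut p.
Proof. by move=> H; apply: cmax_ge H (ph_le H). Qed.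
Lemma cut_ph p : 0 < cut p -> ph p (cut p).
Proof. exact: cmax_ph. Qed.

Lemma tye_pos : 0 < tye. Proof. by case: HY => _ [H _]; lia. Qed.

Lemma cut_j : tye <= cut j.
Proof. apply: cut_ge; split; [exact: tye_pos|by right; right]. Qed.

Lemma inv_neq_Ye p t : invoked_at r p t -> (p, t) <> (j, tye).
Proof.
move=> [x Hx] [E1 E2]; subst.
case: HY => _ [_ [[v Hv] _]].
by have := ev_inj Hx Hv.
Qed.

Lemma notpast p t : invoked_at r p t -> ~ chain r (p, t) (j, tye) -> cut p < t.
Proof.
move=> Hinv Hnc; have Hneq := inv_neq_Ye Hinv.
have Ht0 : 0 < t by case: Hinv => x [].
rewrite ltnNge; apply/negP => Hle.
have Hc0 : 0 < cut p by lia.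
case: (cut_ph Hc0) => _ [H|[H|[E1 E2]]].
- case: (leqP t (cut p).-1) => H2; first by apply: Hnc; apply: chain_down H2 H.
  have Ec : cut p = t by lia.
  rewrite Ec in H.
  have Hns : forall q m, ~ ev_at r p (t.-1).+1 (EAct (ASend q m)).
    move=> q m Hm; case: Hinv => x Hx.
    by rewrite prednK // in Hm; have := ev_inj Hx Hm.
  by case: (chain_nonsend H Hns); rewrite prednK // => Hc; first [exact: Hnc Hc | exact: Hneq (esym Hc)].
- by apply: Hnc; apply: chain_down Hle H.
- subst p; rewrite E2 in Hle.
  rewrite leq_eqVlt in Hle; case/orP: Hle => [/eqP Et|Hlt]; first by apply: Hneq; rewrite Et.
  by apply: Hnc; apply: chain_loc.
Qed.

Lemma past_rcv q : 0 < cut q -> exists t', t' <= cut q /\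
  (chain r (q, t') (j, tye) \/ (q, t') = (j, tye)) /\
  (forall p, rc q p t' = rc q p (cut q)).
Proof.
move=> Hc; case: (cut_ph Hc) => _ [H|[H|H]]; last first.
- by exists (cut q); split=> //; split=> //; right.
- by exists (cut q); split=> //; split=> //; left.
case: (classic (exists q' m, ev_at r q (cut q) (EAct (ASend q' m)))).
- move=> [q' [m Hm]]; exists (cut q).-1; split; first by lia.
  split; first by left.
  move=> p; case/ev_at_hist: Hm => _ Hh.
  by rewrite /rc Hh -cats1 count_cat /= !addn0.
- move=> Hns.
  have Hns' : forall q0 m, ~ ev_at r q (cut q).-1.+1 (EAct (ASend q0 m)).
    by move=> q0 m Hm; apply: Hns; exists q0, m; rewrite prednK in Hm.
  exists (cut q); split=> //; split=> //.
  by case: (chain_nonsend H Hns'); rewrite prednK //; [left|right].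
Qed.

Lemma caus p q : rc q p (cut q) <= size (sl p q (cut p)).
Proof.
rewrite leqNgt; apply/negP => Hlt.
set k := size (sl p q (cut p)) in Hlt.
have Hc0 : 0 < cut q.
  rewrite lt0n; apply/negP => /eqP Hc; move: Hlt; rewrite Hc /rc.
  by case: H0 => -> _.
have Hinv := (inv_r (cut q)).2 p q.
have Hpq : cut p <= cut q.
  rewrite leqNgt; apply/negP => H.
  have := size_sl_mono p q (ltnW H); rewrite -/k; lia.
have [s [Hs1 Hs2]] := @ivt (fun t => size (sl p q t)) _ _ k Hpq (leqnn _) (leq_trans Hlt Hinv).
have [m Hsend] : exists m, ev_at r p s.+1 (EAct (ASend q m)).
  move: Hs2; rewrite sl_step size_cat.
  case Ee: (E s p) => [| |x|k'] /=; try lia.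
  case Ea: (Ac s p) => [a|q' m|v] /=; try lia.
  case: eqP => [Eq|_] /=; last lia.
  subst q'; exists m; split=> //.
  by rewrite HR2 Ee Ea.
have [t' [_ [Hch Hrc]]] := past_rcv Hc0.
have Hmd : msg_delivered r p q s t'.
  exists m; split=> //.
  rewrite -size_sl -/(rc q p t') Hrc; lia.
have Hps : chain r (p, s) (j, tye).
  case: Hch => [Hch|Heq]; last by rewrite -Heq; apply: chain_msg.
  by apply: chain_trans Hch; apply: chain_msg.
have Hph : ph p s.+1 by split=> //; left.
have := cut_ge Hph; lia.
Qed.

Definition F p m := if m <= tye then minn m (cut p) else maxn (cut p) (m - tye).
Definition G m := if m < tye then m else m - tye.

Definition rr : run n V A M Inp Res := fun m =>
  GState (fun p => lst r p (F p m))
         (fun j0 i0 => drop (rc i0 j0 (F i0 m)) (sl j0 i0 (F j0 m))).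

Lemma lst_rr p m : lst rr p m = lst r p (F p m).
Proof. by []. Qed.

Lemma F_ge p m : tye <= m -> F p m = maxn (cut p) (m - tye).
Proof.
rewrite /F => H; have := cut_le p; case: (leqP m tye) => H2 H3 //.
have Em : m = tye by lia.
subst m; rewrite subnn maxn0; lia.
Qed.

Lemma F_le p m : m <= tye -> F p m = minn m (cut p).
Proof. by rewrite /F => ->. Qed.

Lemma F_step p m : F p m.+1 = F p m \/ (F p m.+1 = (F p m).+1 /\ F p m = G m).
Proof.
have := cut_le p; rewrite /G => Hc.
case: (ltnP m tye) => Hm.
- rewrite (F_le p (ltnW Hm)) F_le //.
  case: (ltnP m (cut p)) => H; [right; split; lia | left; lia].
- rewrite (F_ge p Hm) F_ge; last by lia.
  case: (leqP (cut p) (m - tye)) => H; [right; split; lia | left; lia].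
Qed.

Lemma F0 p : F p 0 = 0.
Proof. by rewrite F_le // min0n. Qed.

Lemma F_shift p t : cut p <= t -> F p (tye + t) = t.
Proof. move=> H; rewrite F_ge ?leq_addr //; lia. Qed.

Lemma F_early p t : t <= cut p -> F p t = t.
Proof. move=> H; have := cut_le p => H2; rewrite F_le; lia. Qed.

Lemma caus' m p q : rc q p (F q m) <= size (sl p q (F p m)).
Proof.
case: (leqP (F q m) (F p m)) => H.
  by apply: leq_trans (rc_mono q p H) ((inv_r (F p m)).2 p q).
have [Hq Hp] : F q m <= cut q /\ cut p <= F p m.
  have := cut_le p; have := cut_le q => Hcq Hcp.
  case: (leqP m tye) => Hm.
  + move: H; rewrite !F_le //; lia.
  + move: H; rewrite !F_ge //; try lia.
apply: leq_trans (rc_mono q p Hq) _.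
apply: leq_trans (caus p q) _.
exact: size_sl_mono.
Qed.

Lemma rc_lt t k p : chan (r t) k p <> [::] -> rc p k t < size (sl k p t).
Proof.
rewrite (inv_r t).1; move: ((inv_r t).2 k p); rewrite leq_eqVlt.
by case/orP => // /eqP ->; rewrite drop_size.
Qed.

Lemma key_deliv m p k : F p m.+1 = (F p m).+1 -> F p m = G m ->
  E (F p m) p = EnvDeliver k -> rc p k (F p m) < size (sl k p (F k m)).
Proof.
move=> Hs HG He.
have := caus' m.+1 k p; rewrite Hs rc_step He /= eqxx addn1.
case: (F_step k m) => [-> //|[Hk HGk]].
move=> _; rewrite HGk -HG; exact: rc_lt (HR4 He).
Qed.

Lemma sl_nth x0 k p a b idx : idx < size (sl k p a) -> idx < size (sl k p b) ->
  nth x0 (sl k p a) idx = nth x0 (sl k p b) idx.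
Proof.
wlog Hab : a b / a <= b.
  move=> W H1 H2; case: (leqP a b) => H; first exact: W.
  by symmetry; apply: W => //; apply: ltnW.
have [s ->] := sl_prefix k p Hab.
by move=> H1 _; rewrite nth_cat H1.
Qed.

Definition env' m p := if F p m.+1 == F p m then EnvSkip else E (F p m) p.
Definition acts' m p := Ac (F p m) p.

Lemma rr_round m : round P (rr m) (rr m.+1).
Proof.
exists (env' m), (acts' m); split; last split.
- move=> p; rewrite /env'; case: eqP => // _ He; exact: HR1 He.
- move=> p /=; case: (F_step p m) => [Hs|[Hs HG]].
    by rewrite /env' Hs eqxx.
  have Hne : (F p m.+1 == F p m) = false by rewrite Hs; apply/eqP; lia.
  rewrite /env' Hne Hs HR2 /acts' /new_loc.
  case He: (E (F p m) p) => [| |x|k] //.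
  have Hlt := key_deliv Hs HG He.
  have Hlt2 := rc_lt (HR4 He).
  have Hc := (inv_r (F p m)).1 k p.
  case Ec: (chan (r (F p m)) k p) => [|x s]; first by case: (HR4 He).
  simpl.
  rewrite (drop_nth x Hlt).
  move: Ec; rewrite Hc (drop_nth x Hlt2) => [[Ex _]].
  by rewrite -(sl_nth x Hlt2 Hlt) Ex.
- move=> j0 i0 /=.
  have Hsl : sl j0 i0 (F j0 m.+1) = sl j0 i0 (F j0 m) ++ sent_to (env' m j0) (acts' m j0) i0.
    rewrite /env' /acts'; case: (F_step j0 m) => [Hs|[Hs _]]; first by rewrite Hs eqxx cats0.
    have Hne : (F j0 m.+1 == F j0 m) = false by rewrite Hs; apply/eqP; lia.
    by rewrite Hne Hs sl_step.
  have Hrc : rc i0 j0 (F i0 m.+1) = rc i0 j0 (F i0 m) + isdel j0 (env' m i0).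
    rewrite /env'; case: (F_step i0 m) => [Hs|[Hs _]]; first by rewrite Hs eqxx addn0.
    have Hne : (F i0 m.+1 == F i0 m) = false by rewrite Hs; apply/eqP; lia.
    by rewrite Hne Hs rc_step.
  rewrite after_del /= Hsl Hrc.
  case Hd: (isdel j0 (env' m i0)).
  + have Hlt : rc i0 j0 (F i0 m) < size (sl j0 i0 (F j0 m)).
      move: Hd; rewrite /env'.
      case: (F_step i0 m) => [Hs|[Hs HG]]; first by rewrite Hs eqxx.
      have Hne : (F i0 m.+1 == F i0 m) = false by rewrite Hs; apply/eqP; lia.
      rewrite Hne; case He: (E (F i0 m) i0) => [| |x|k] //= /eqP Hk; subst k.
      exact: key_deliv Hs HG He.
    by rewrite behead_drop addn1 drop_catl.
  + by rewrite addn0 drop_catl // caus'.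
Qed.

Lemma rr_run : is_run P rr.
Proof.
split; last exact: rr_round.
case: H0 => Hl Hc; split=> p /=; first by rewrite F0; apply: Hl.
by move=> i0; rewrite /sl !F0 /lst (Hl p).
Qed.

Lemma ev_shift p t e : cut p < t -> (ev_at rr p (tye + t) e <-> ev_at r p t e).
Proof.
move=> H; rewrite /ev_at !lst_rr F_shift; last lia.
have -> : (tye + t).-1 = tye + t.-1 by lia.
rewrite F_shift; last lia.
split=> [[_ ->]|[_ ->]]; split=> //; lia.
Qed.

Lemma ev_early p t e : t <= cut p -> (ev_at rr p t e <-> ev_at r p t e).
Proof.
move=> H; rewrite /ev_at !lst_rr F_early // F_early; last lia.
by [].
Qed.

Lemma op_end_uniq (rx : run n V A M Inp Res) p ts a b :
  op_end rx p ts a -> op_end rx p ts b -> a = b.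
Proof.
move=> [_ [Ha1 [Ha2 Ha3]]] [_ [Hb1 [Hb2 Hb3]]].
case: (ltngtP a b) => // H.
- by case: (Hb3 a); [lia|].
- by case: (Ha3 b); [lia|].
Qed.

Lemma oe_shift p ts te : cut p < ts -> op_end r p ts te -> op_end rr p (tye + ts) (tye + te).
Proof.
move=> Hc [[x Hx] [H1 [[v Hv] H3]]]; split; last split; last split.
- by exists x; apply/ev_shift.
- lia.
- by exists v; apply/ev_shift => //; lia.
- move=> t Ht; have Ht' : ts < t - tye < te by lia.
  have Et : t = tye + (t - tye) by lia.
  case: (H3 _ Ht') => N1 N2; rewrite Et; split.
  + by move=> [y Hy]; apply: N1; exists y; move/ev_shift: Hy; apply; lia.
  + by move=> [y Hy]; apply: N2; exists y; move/ev_shift: Hy; apply; lia.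
Qed.

Lemma oe_early p ts te : te <= cut p -> op_end r p ts te -> op_end rr p ts te.
Proof.
move=> Hc [[x Hx] [H1 [[v Hv] H3]]]; split; last split; last split.
- by exists x; apply/ev_early => //; lia.
- lia.
- by exists v; apply/ev_early.
- move=> t Ht; case: (H3 _ Ht) => N1 N2; split.
  + by move=> [y Hy]; apply: N1; exists y; move/ev_early: Hy; apply; lia.
  + by move=> [y Hy]; apply: N2; exists y; move/ev_early: Hy; apply; lia.
Qed.

Lemma corr_shift p ts : invoked_at r p ts -> cut p < ts -> corresponds r rr p ts (tye + ts).
Proof.
move=> [x Hx] Hc; split; last split; last split.
- by exists x.
- by exists x; apply/ev_shift.
- by rewrite lst_rr F_shift //; lia.
- move=> te Hte; exists (tye + te); split; first exact: oe_shift.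
  case: Hte => _ [H1 _]; by rewrite lst_rr F_shift //; lia.
Qed.

Lemma corr_Y : corresponds r rr j ty ty.
Proof.
have Hcj := cut_j.
case: (HY) => [[x Hx] [H1 _]]; split; last split; last split.
- by exists x.
- have Hty : ty <= cut j by lia.
  by exists x; apply/ev_early.
- by rewrite lst_rr F_early //; lia.
- move=> te Hte; have Ete := op_end_uniq Hte HY; subst te.
  exists tye; split; first exact: oe_early.
  by rewrite lst_rr F_early.
Qed.

Lemma ev_at_sz (rx : run n V A M Inp Res) p t e : ev_at rx p t e ->
  size (lst rx p t).2 = (size (lst rx p t.-1).2).+1.
Proof. by case=> _ ->; rewrite /= size_rcons. Qed.

Lemma L_lo p m u e : lst rr p m = lst r p u -> ev_at r p u e -> u <= F p m.
Proof.
move=> Heq Hu; rewrite leqNgt; apply/negP => H.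
have Hs := ev_at_sz Hu.
have := sz_mono p (_ : F p m <= u.-1); rewrite /sz -lst_rr Heq Hs; lia.
Qed.

Lemma L_hi p m u e : lst rr p m = lst r p u -> ev_at rr p m e -> F p m.-1 < u.
Proof.
move=> Heq Hm; rewrite ltnNge; apply/negP => H.
have Hs := ev_at_sz Hm.
have := sz_mono p H; rewrite /sz -lst_rr -Heq Hs; lia.
Qed.

Lemma F_lo_conseq p m u : cut p < u -> u <= F p m -> tye + u <= m.
Proof.
move=> Hc; have := cut_le p => Hl.
case: (leqP m tye) => Hm; first by rewrite F_le //; lia.
by rewrite F_ge; lia.
Qed.

Lemma F_hi_conseq p m u : F p m.-1 < u -> m <= tye + u.
Proof.
have := cut_le p => Hl.
case: (leqP m.-1 tye) => Hm; first by lia.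
by rewrite F_ge; lia.
Qed.

Lemma F_hi_early p m u : u <= cut p -> F p m.-1 < u -> m <= tye.
Proof.
move=> Hu; have := cut_le p => Hl.
case: (leqP m.-1 tye) => Hm.
- case: (leqP m tye) => // Hm2.
  have Em : m.-1 = tye by lia.
  rewrite Em F_ge //; lia.
- by rewrite F_ge; lia.
Qed.

Lemma loc_equiv_rr : loc_equiv r rr.
Proof.
move=> p s; split=> [[m <-]|[m <-]]; last by exists (F p m).
case: (leqP m (cut p)) => H.
- by exists m; rewrite lst_rr F_early.
- by exists (tye + m); rewrite lst_rr F_shift //; lia.
Qed.

Lemma main_sec (i : 'I_n) (tx : nat) :
  invoked_at r i tx ->
  ~ chain r (i, tx) (j, tye) ->
  exists r' : run n V A M Inp Res,
    is_run P r' /\ loc_equiv r r' /\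
    (exists tx', corresponds r r' i tx tx') /\
    (exists ty', corresponds r r' j ty ty') /\
    (forall tx' ty' tye', corresponds r r' i tx tx' -> corresponds r r' j ty ty' ->
        op_end r' j ty' tye' -> tye' < tx') /\
    (forall (k : 'I_n) (tz tze txe : nat),
        op_end r k tz tze -> op_end r i tx txe -> txe < tz ->
        ~ chain r (k, tz) (j, tye) ->
        (exists tz', corresponds r r' k tz tz') /\
        (forall tx' txe' tz', corresponds r r' i tx tx' -> op_end r' i tx' txe' ->
            corresponds r r' k tz tz' -> txe' < tz')).
Proof.
move=> Hix Hnc.
have Hcx := notpast Hix Hnc.
have Htx0 : 0 < tx by case: Hix => x [].
exists rr; split; first exact: rr_run.
split; first exact: loc_equiv_rr.
split; first by exists (tye + tx); apply: corr_shift.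
split; first by exists ty; apply: corr_Y.
split.
- move=> tx' ty' tye' [_ [[x' Hx'] [Heqx _]]] [_ [_ [_ Hcy]]] Hoe.
  have [x Hx] := Hix.
  have H1 := L_lo (esym Heqx) Hx.
  have H2 := F_lo_conseq Hcx H1.
  have [te' [Hoe' Heq]] := Hcy _ HY.
  have Ee := op_end_uniq Hoe Hoe'; subst te'.
  case: Hoe => _ [_ [[v Hv] _]].
  have H3 := L_hi (esym Heq) Hv.
  have H4 := F_hi_early cut_j H3.
  lia.
- move=> k tz tze txe Hz Hx Hlt Hnz.
  have Hiz : invoked_at r k tz by case: Hz.
  have Hcz := notpast Hiz Hnz.
  split; first by exists (tye + tz); apply: corr_shift.
  move=> tx' txe' tz' [_ [_ [_ Hcx']]] Hoe [_ [_ [Heqz _]]].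
  have [z Hzz] := Hiz.
  have H1 := F_lo_conseq Hcz (L_lo (esym Heqz) Hzz).
  have [te' [Hoe' Heq]] := Hcx' _ Hx.
  have Ee := op_end_uniq Hoe Hoe'; subst te'.
  case: Hoe => _ [_ [[v Hv] _]].
  have H3 := F_hi_conseq (L_hi (esym Heq) Hv).
  lia.
Qed.

End RunFacts.

Theorem theorem9 (n : nat) (V A M Inp Res : Type)
    (P : protocol n V A M Inp Res) (r : run n V A M Inp Res)
    (i : 'I_n) (tx : nat)      (* operation X = (i, tx) *)
    (j : 'I_n) (ty tye : nat)  (* operation Y = (j, ty), ending at tye *) :
  is_run P r ->
  invoked_at r i tx ->
  op_end r j ty tye ->
  ~ chain r (i, tx) (j, tye) ->
  exists r' : run n V A M Inp Res,
    is_run P r' /\ loc_equiv r r' /\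
    (* (i) Y <_{r'} X *)
    (exists tx', corresponds r r' i tx tx') /\
    (exists ty', corresponds r r' j ty ty') /\
    (forall tx' ty' tye', corresponds r r' i tx tx' -> corresponds r r' j ty ty' ->
        op_end r' j ty' tye' -> tye' < tx') /\
    (* (ii) X <_{r'} Z for every Z completing in r with X <_r Z and Z not ~> Y *)
    (forall (k : 'I_n) (tz tze txe : nat),
        op_end r k tz tze -> op_end r i tx txe -> txe < tz ->
        ~ chain r (k, tz) (j, tye) ->
        (exists tz', corresponds r r' k tz tz') /\
        (forall tx' txe' tz', corresponds r r' i tx tx' -> op_end r' i tx' txe' ->
            corresponds r r' k tz tz' -> txe' < tz')).
Proof.
move=> [H0 Hr] Hix HY Hnc.
have HC : forall t, {ea : ('I_n -> envact n Inp) * ('I_n -> act n A M Res) |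
    (forall i, ea.1 i = EnvMove -> P (loc (r t) i) (ea.2 i)) /\
    (forall i, loc (r t.+1) i = new_loc (r t) i (ea.1 i) (ea.2 i)) /\
    (forall j i, chan (r t.+1) j i =
       after_delivery (r t) j i (ea.1 i) ++ sent_to (ea.1 j) (ea.2 j) i) /\
    (forall i k, ea.1 i = EnvDeliver k -> chan (r t) k i <> [::])}.
  move=> t; apply: constructive_indefinite_description.
  have [env [acts H]] := round_norm (Hr t).
  by exists (env, acts).
pose E t := (sval (HC t)).1.
pose Ac t := (sval (HC t)).2.
have HR1 : forall t i, E t i = EnvMove -> P (lst r i t) (Ac t i).
  by move=> t; case: (svalP (HC t)).
have HR2 : forall t i, lst r i t.+1 = new_loc (r t) i (E t i) (Ac t i).
  by move=> t; case: (svalP (HC t)) => _ [].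
have HR3 : forall t j i, chan (r t.+1) j i =
   after_delivery (r t) j i (E t i) ++ sent_to (E t j) (Ac t j) i.
  by move=> t; case: (svalP (HC t)) => _ [_ []].
have HR4 : forall t i k, E t i = EnvDeliver k -> chan (r t) k i <> [::].
  by move=> t; case: (svalP (HC t)) => _ [_ [_]].
exact: (main_sec H0 HR1 HR2 HR3 HR4 HY Hix Hnc).
Qed.
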